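(* Let $G$ be a simple digraph with $n$ vertices $v_1,\ldots,v_n$ and $m$ arcs, having no isolated vertices, and let $M_1=m+\frac12\sum_{i=1}^n(d_i^+-d_i^-)^2$. Then $SLE(G)\le 2M_1$.
   Context: A simple digraph is an orientation of a simple undirected graph (no loops, and between two distinct vertices at most one arc, in one direction). $d_i^+,d_i^-$ are the out- and in-degree of $v_i$; a vertex is isolated if $d_i^++d_i^-=0$. The skew-adjacency matrix $S(G)=[s_{ij}]$ has $s_{ij}=1$ if $(v_i,v_j)$ is an arc, $s_{ij}=-1$ if $(v_j,v_i)$ is an arc, and $0$ otherwise. $\widetilde{D}(G)=\mathrm{diag}(d_1^+-d_1^-,\ldots,d_n^+-d_n^-)$, $\widetilde{SL}(G)=\widetilde{D}(G)-S(G)$, and $SLE(G)=\sum_{i=1}^n|\mu_i|$ where $\mu_1,\ldots,\mu_n$ are the eigenvalues of $\widetilde{SL}(G)$ counted with algebraic multiplicity. *)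

(* Defs.v *)
From HB Require Import structures.
From mathcomp Require Import all_boot all_order all_algebra all_field.
Set Implicit Arguments. Unset Strict Implicit. Unset Printing Implicit Defensive.
Import Order.TTheory GRing.Theory Num.Theory.
Local Open Scope ring_scope.

(* A simple digraph on vertex set 'I_n given by its arc relation:
   at most one arc between two vertices (hence no loops). *)
Definition simple_digraph (n : nat) (arc : rel 'I_n) : Prop :=
  forall i j, arc i j -> ~~ arc j i.

Definition num_arcs (n : nat) (arc : rel 'I_n) : nat :=
  #|[set p : 'I_n * 'I_n | arc p.1 p.2]|.

Definition outdeg (n : nat) (arc : rel 'I_n) (i : 'I_n) : nat := #|[set j | arc i j]|.
Definition indeg (n : nat) (arc : rel 'I_n) (i : 'I_n) : nat := #|[set j | arc j i]|.

Definition no_isolated (n : nat) (arc : rel 'I_n) : Prop :=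
  forall i, outdeg arc i + indeg arc i != 0%N.

Definition skew_adj (n : nat) (arc : rel 'I_n) : 'M[algC]_n :=
  \matrix_(i, j) ((arc i j)%:R - (arc j i)%:R).

Definition Dtilde (n : nat) (arc : rel 'I_n) : 'M[algC]_n :=
  diag_mx (\row_i ((outdeg arc i)%:R - (indeg arc i)%:R)).

Definition skew_lap (n : nat) (arc : rel 'I_n) : 'M[algC]_n :=
  Dtilde arc - skew_adj arc.

Definition M1 (n : nat) (arc : rel 'I_n) : algC :=
  (num_arcs arc)%:R +
  2^-1 * \sum_i ((outdeg arc i)%:R - (indeg arc i)%:R) ^+ 2.

(* Main.v *)
Require Import Defs.
From HB Require Import structures.
From mathcomp Require Import all_boot all_order all_algebra all_field.
Import Order.TTheory GRing.Theory Num.Theory Num.Def.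
Local Open Scope ring_scope.

Definition adjm {n} (M : 'M[algC]_n) : 'M[algC]_n := map_mx conjC M^T.

Lemma char_poly_conj n (P A : 'M[algC]_n) : P \in unitmx ->
  char_poly (P *m A *m invmx P) = char_poly A.
Proof.
move=> Pu.
set Q := map_mx polyC P; set Qi := map_mx polyC (invmx P).
have QQi : Q *m Qi = 1%:M by rewrite -map_mxM mulmxV // map_mx1.
have QiQ : Qi *m Q = 1%:M by rewrite -map_mxM mulVmx // map_mx1.
rewrite /char_poly.
have -> : char_poly_mx (P *m A *m invmx P) = Q *m char_poly_mx A *m Qi.
  rewrite /char_poly_mx mulmxBr mulmxBl !map_mxM.
  congr (_ - _).
  by rewrite -mulmxA -scalar_mxC mulmxA QQi mul1mx.
rewrite det_mulmx det_mulmx mulrC mulrA -det_mulmx QiQ det1 mul1r //.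
Qed.

Lemma trace_adj n (M : 'M[algC]_n) :
  mxtrace (M *m adjm M) = \sum_i \sum_j (`|M i j| ^+ 2).
Proof.
rewrite /mxtrace; apply: eq_bigr => i _; rewrite mxE; apply: eq_bigr => j _.
by rewrite !mxE normCK.
Qed.

Lemma adjmM n (X Y : 'M[algC]_n) : adjm (X *m Y) = adjm Y *m adjm X.
Proof. by rewrite /adjm trmx_mul map_mxM. Qed.

Lemma adjmK n (X : 'M[algC]_n) : adjm (adjm X) = X.
Proof. exact: trmxCK. Qed.

Lemma schur_tr n (A : 'M[algC]_n) : exists T : 'M[algC]_n,
  [/\ is_trig_mx T, char_poly T = char_poly A &
      mxtrace (T *m adjm T) = mxtrace (A *m adjm A)].
Proof.
case: (posnP n) => [n0|npos].
  exists A; split => //; apply/is_trig_mxP => -[i hi]; exfalso; by rewrite n0 in hi.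
have [P Pu Ptrig] := Schur A npos.
have Punit : P \in unitmx by exact: unitarymx_unit.
have Pinv : invmx P = adjm P by rewrite invmx_unitary.
have eT : conjmx P A = P *m A *m adjm P by rewrite /conjmx pinvmxE // Pinv.
exists (conjmx P A); split => //.
  by rewrite /conjmx pinvmxE // char_poly_conj.
rewrite eT !adjmM adjmK.
have PP : adjm P *m P = 1%:M by rewrite -Pinv mulVmx.
rewrite -!mulmxA (mulmxA (adjm P) P) PP mul1mx mulmxA mxtrace_mulC mulmxA.
by rewrite -(mulmxA (adjm A)) PP mulmx1 mxtrace_mulC.
Qed.
Lemma num_arcsE n (arc : rel 'I_n) :
  num_arcs arc = (\sum_i \sum_j (arc i j : nat))%N.
Proof.
rewrite /num_arcs -sum1_card (pair_bigA _ (fun i j => (arc i j : nat))) /=.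
rewrite big_mkcond /=; apply: eq_bigr => p _; rewrite !inE; by case: (arc _ _).
Qed.

Lemma outdegE n (arc : rel 'I_n) i : outdeg arc i = (\sum_j (arc i j : nat))%N.
Proof.
rewrite /outdeg -sum1_card big_mkcond /=; apply: eq_bigr => j _; rewrite !inE; by case: (arc _ _).
Qed.

Lemma indegE n (arc : rel 'I_n) i : indeg arc i = (\sum_j (arc j i : nat))%N.
Proof.
rewrite /indeg -sum1_card big_mkcond /=; apply: eq_bigr => j _; rewrite !inE; by case: (arc _ _).
Qed.

Lemma n_le_2m n (arc : rel 'I_n) : no_isolated arc -> (n <= 2 * num_arcs arc)%N.
Proof.
move=> hni.
have -> : (2 * num_arcs arc = \sum_i (outdeg arc i + indeg arc i))%N.
  rewrite big_split /= mul2n -addnn {1}num_arcsE.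
  congr (_ + _)%N; first by apply: eq_bigr => i _; rewrite outdegE.
  rewrite num_arcsE exchange_big /=; apply: eq_bigr => i _; by rewrite indegE.
rewrite -{1}(card_ord n) -sum1_card; apply: leq_sum => i _.
by rewrite lt0n hni.
Qed.

Definition dlt {n} (arc : rel 'I_n) i : algC := (outdeg arc i)%:R - (indeg arc i)%:R.

Lemma entry_sq n (arc : rel 'I_n) i j : simple_digraph arc ->
  `|skew_lap arc i j| ^+ 2 =
    (i == j)%:R * dlt arc i ^+ 2 + (arc i j)%:R + (arc j i)%:R.
Proof.
move=> hs.
rewrite /skew_lap /Dtilde /skew_adj !mxE.
have [<-|nij] := eqVneq i j.
  have hii : arc i i = false by apply/negP => h; move: (hs _ _ h); rewrite h.
  rewrite hii subrr subr0 mulr1n mul1r addr0 addr0 real_normK //.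
  by rewrite rpredB // realn.
rewrite mulr0n mul0r add0r add0r normrN.
case hij: (arc i j); case hji: (arc j i) => //=.
- by move: (hs _ _ hij); rewrite hji.
- by rewrite subr0 normr1 expr1n addr0.
- by rewrite sub0r normrN normr1 expr1n add0r.
- by rewrite subrr normr0 expr0n add0r.
Qed.

Lemma sumsq_lap n (arc : rel 'I_n) : simple_digraph arc ->
  \sum_i \sum_j (`|skew_lap arc i j| ^+ 2) =
    \sum_i dlt arc i ^+ 2 + 2 * (num_arcs arc)%:R.
Proof.
move=> hs.
under eq_bigr => i _ do under eq_bigr => j _ do rewrite entry_sq //.
have hA : forall F : 'I_n -> 'I_n -> bool,
    \sum_i \sum_j ((F i j)%:R : algC) = (\sum_i \sum_j (F i j : nat))%N%:R.
  move=> F; rewrite natr_sum; apply: eq_bigr => i _; by rewrite natr_sum.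
under eq_bigr => i _ do rewrite !big_split /=.
rewrite !big_split /= hA (hA (fun i j => arc j i)) -num_arcsE.
rewrite (exchange_big _ _ _ _ _ (fun i j => (arc j i : nat))) -num_arcsE /=.
rewrite mulr_natl mulr2n addrA; congr (_ + _ + _).
apply: eq_bigr => i _; rewrite (bigD1 i) //= eqxx mul1r big1 ?addr0 //.
by move=> j /negbTE; rewrite eq_sym => ->; rewrite mul0r.
Qed.

Lemma norm_le_sq (x : algC) : 2 * `|x| <= `|x| ^+ 2 + 1.
Proof.
have h : 0 <= (`|x| - 1) ^+ 2 by rewrite -realEsqr rpredB // ?normr_real ?real1.
rewrite mulr_natl -subr_ge0; move: h; rewrite sqrrB expr1n mulr1.
by rewrite addrAC.
Qed.

Theorem corollary3 (n : nat) (arc : rel 'I_n) (eigs : seq algC) :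
  simple_digraph arc -> no_isolated arc ->
  char_poly (skew_lap arc) = \prod_(z <- eigs) ('X - z%:P) ->
  \sum_(z <- eigs) `|z| <= 2 * M1 arc.
Proof.
move=> hs hni hchar.
have [T [Ttrig Tchar Ttr]] := schur_tr _ (skew_lap arc).
have hp : perm_eq eigs [seq T i i | i <- enum 'I_n].
  apply: prod_XsubC_eq; rewrite big_map big_enum /= -char_poly_trig //.
  by rewrite Tchar hchar.
rewrite (perm_big _ hp) big_map big_enum /=.
set S := \sum_i dlt arc i ^+ 2.
set m := (num_arcs arc)%:R : algC.
have hM : 2 * M1 arc = S + 2 * m.
  rewrite /M1 mulrDr mulrA mulfV ?pnatr_eq0 // mul1r addrC.
  by congr (_ + _); apply: eq_bigr.
have S0 : 0 <= S by apply: sumr_ge0 => i _; rewrite -realEsqr rpredB // realn.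
have m0 : 0 <= m by rewrite ler0n.
have hn : (n%:R : algC) <= 2 * m.
  by rewrite -natrM ler_nat n_le_2m.
have hsq : \sum_i `|T i i| ^+ 2 <= S + 2 * m.
  rewrite -sumsq_lap // -trace_adj -Ttr trace_adj.
  apply: ler_sum => i _; rewrite (bigD1 i) //= lerDl.
  by apply: sumr_ge0 => j _; rewrite exprn_ge0.
rewrite hM -(ler_pM2l (_ : 0 < 2)) ?ltr0n //.
have -> : \sum_(i in 'I_n) `|T i i| = \sum_i `|T i i| by apply: eq_bigl.
rewrite mulr_sumr.
apply: (le_trans (ler_sum _ (fun i _ => norm_le_sq (T i i)))).
rewrite big_split /= sumr_const card_ord.
apply: (le_trans (lerD hsq hn)).
by rewrite [X in _ <= X]mulr_natl mulr2n lerD2l lerDr.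
Qed.
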